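(* If $M\preceq N$ are two non-quasianalytic weight sequences, then $L(M)\preceq L(N)$ and $\underline L(M)\preceq\underline L(N)$.
   Context: A weight sequence is $M=(M_k)_{k\ge0}$ with $M_k=\mu_0\cdots\mu_k$, $1=\mu_0\le\mu_1\le\cdots$, $\mu_k\to\infty$; non-quasianalytic if $\sum1/\mu_k<\infty$. For positive sequences, $M\preceq N$ means $\sup_{k\ge1}(M_k/N_k)^{1/k}<\infty$. $L(M)_0=1$, $L(M)_k=\min_{0\le j<k}\big(k/\sum_{\ell\ge k}\mu_\ell^{-1}\big)^{k-j}M_j$ for $k\ge1$. For a positive sequence $P$ with $P_k^{1/k}\to\infty$, $\omega_P(t)=\sup_k\log(t^kP_0/P_k)$ and its log-convex minorant is $\underline P_k=P_0\sup_{t\ge0}t^ke^{-\omega_P(t)}$; $\underline L(M)$ is the log-convex minorant of $L(M)$. *)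

(* Defs.v *)
From Stdlib Require Import Reals.
From Coquelicot Require Import Coquelicot.
Open Scope R_scope.

(* A weight sequence is given by its quotients mu; M_k = mu_0 * ... * mu_k. *)
Definition Mseq (mu : nat -> R) (k : nat) : R := prod_f_R0 mu k.

Definition weight_seq (mu : nat -> R) : Prop :=
  mu 0%nat = 1 /\ (forall k, mu k <= mu (S k)) /\ is_lim_seq mu p_infty.

Definition nonquasianalytic (mu : nat -> R) : Prop :=
  ex_series (fun k => / mu k).

Definition preceq (P Q : nat -> R) : Prop :=
  exists C : R, forall k : nat, (1 <= k)%nat ->
    Rpower (P k / Q k) (/ INR k) <= C.

Definition tail (mu : nat -> R) (k : nat) : R :=
  Series (fun l => / mu (k + l)%nat).

Fixpoint finmin (f : nat -> R) (n : nat) : R :=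
  match n with
  | O => f O
  | S m => Rmin (finmin f m) (f (S m))
  end.

Definition Lseq (mu : nat -> R) (k : nat) : R :=
  match k with
  | O => 1
  | S n => finmin (fun j => (INR k / tail mu k) ^ (k - j) * Mseq mu j) n
  end.

Definition omega (P : nat -> R) (t : R) : Rbar :=
  Sup_seq (fun k => let x := t ^ k * P 0%nat / P k in
                    if Rlt_dec 0 x then Finite (ln x) else m_infty).

Definition expneg (w : Rbar) : R :=
  match w with
  | Finite x => exp (- x)
  | _ => 0
  end.

Definition lc_minorant (P : nat -> R) (k : nat) : R :=
  P 0%nat * real (Lub_Rbar (fun x => exists t, 0 <= t /\ x = t ^ k * expneg (omega P t))).

(* Main.v *)
Require Import Defs.
From Stdlib Require Import Reals Lra Lia.
From Coquelicot Require Import Coquelicot.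
Open Scope R_scope.

Fixpoint pr (c : nat -> R) (n : nat) : R :=
  match n with O => 1 | S m => pr c m * c (S m) end.
Fixpoint sm (c : nat -> R) (n : nat) : R :=
  match n with O => 0 | S m => sm c m + c (S m) end.

Lemma pr_pos c n : (forall i, 0 < c i) -> 0 < pr c n.
Proof. intros H; induction n; simpl; [lra|]. apply Rmult_lt_0_compat; auto. Qed.

Lemma sm_nonneg c n : (forall i, 0 <= c i) -> 0 <= sm c n.
Proof. intros H; induction n; simpl; [lra|]. specialize (H (S n)); lra. Qed.

Lemma pr_mul f g n : pr (fun i => f i * g i) n = pr f n * pr g n.
Proof. induction n; simpl; [ring|]. rewrite IHn; ring. Qed.

Lemma pr_inv g n : (forall i, 0 < g i) -> pr (fun i => / g i) n = / pr g n.
Proof. intros H; induction n; simpl; [field|]. rewrite IHn.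
  rewrite Rinv_mult. reflexivity. Qed.

Lemma pr_ext f g n : (forall i, (1 <= i <= n)%nat -> f i = g i) -> pr f n = pr g n.
Proof. induction n; intros H; simpl; [reflexivity|].
  rewrite IHn by (intros; apply H; lia). rewrite H by lia. reflexivity. Qed.

Lemma sm_ext f g n : (forall i, (1 <= i <= n)%nat -> f i = g i) -> sm f n = sm g n.
Proof. induction n; intros H; simpl; [reflexivity|].
  rewrite IHn by (intros; apply H; lia). rewrite H by lia. reflexivity. Qed.

Lemma pr_const a n : pr (fun _ => a) n = a ^ n.
Proof. induction n; simpl; [reflexivity|]. rewrite IHn; ring. Qed.

Lemma pr_le_pow c a n : (forall i, (1 <= i <= n)%nat -> 0 <= c i <= a) -> pr c n <= a ^ n.
Proof. induction n; intros H; simpl; [lra|].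
  assert (Hn := IHn (fun i Hi => H i ltac:(lia))).
  assert (H1 := H (S n) ltac:(lia)).
  assert (0 <= pr c n).
  { clear IHn Hn. induction n; simpl; [lra|]. apply Rmult_le_pos.
    apply IHn; intros; apply H; lia. apply H; lia. }
  rewrite Rmult_comm. apply Rmult_le_compat; lra. Qed.

Lemma sm_lin c B n : sm (fun i => c i / B - 1) n = sm c n / B - INR n.
Proof. induction n; simpl sm; [simpl; unfold Rdiv; ring|].
  rewrite IHn, S_INR. unfold Rdiv; ring. Qed.

Lemma sm_scal c a n : sm (fun i => a * c i) n = a * sm c n.
Proof. induction n; simpl; [ring|]. rewrite IHn; ring. Qed.

Lemma sm_le f g n : (forall i, f i <= g i) -> sm f n <= sm g n.
Proof. intros H; induction n; simpl; [lra|]. specialize (H (S n)); lra. Qed.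

Lemma exp_ge z : 1 + z <= exp z.
Proof. destruct (Req_dec z 0) as [->|Hz]. rewrite exp_0; lra.
  left; apply exp_ineq1; auto. Qed.

Lemma amgm0 y B n : (forall i, 0 < y i) -> 0 < B ->
  pr y n <= B ^ n * exp (sm (fun i => y i / B - 1) n).
Proof. intros Hy HB. induction n; simpl.
  - rewrite exp_0; lra.
  - rewrite exp_plus.
    assert (H1 : y (S n) <= B * exp (y (S n) / B - 1)).
    { assert (H2 := exp_ge (y (S n) / B - 1)).
      assert (B * (1 + (y (S n) / B - 1)) = y (S n)) by (field; lra).
      assert (B * (1 + (y (S n) / B - 1)) <= B * exp (y (S n) / B - 1)).
      { apply Rmult_le_compat_l; lra. } lra. }
    assert (0 < pr y n) by (apply pr_pos; auto).
    assert (0 <= y (S n)) by (left; auto).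
    replace (B * B ^ n * (exp (sm (fun i : nat => y i / B - 1) n) * exp (y (S n) / B - 1)))
      with ((B ^ n * exp (sm (fun i : nat => y i / B - 1) n)) * (B * exp (y (S n) / B - 1))) by ring.
    apply Rmult_le_compat; lra. Qed.

Lemma sm_pos y n : (forall i, 0 < y (S i)) -> (1 <= n)%nat -> 0 < sm y n.
Proof. intros H Hn. destruct n; [lia|]. simpl.
  assert (0 <= sm y n).
  { clear Hn. induction n; simpl; [lra|]. specialize (H n). lra. }
  specialize (H n); lra. Qed.

Lemma amgm y n : (forall i, 0 < y i) -> (1 <= n)%nat ->
  pr y n <= (sm y n / INR n) ^ n.
Proof. intros Hy Hn. assert (Hs := sm_pos y n (fun i => Hy (S i)) Hn).
  assert (HnR : 0 < INR n) by (apply lt_0_INR; lia).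
  assert (HB : 0 < sm y n / INR n) by (apply Rdiv_lt_0_compat; auto).
  eapply Rle_trans. apply (amgm0 y _ n Hy HB).
  rewrite sm_lin. replace (sm y n / (sm y n / INR n) - INR n) with 0 by (field; lra).
  rewrite exp_0; lra. Qed.

Lemma sum_f_ge_last f n : (forall i, 0 <= f i) -> f n <= sum_f_R0 f n.
Proof. intros H; destruct n; simpl; [lra|].
  assert (0 <= sum_f_R0 f n). { clear -H; induction n; simpl. apply H. specialize (H (S n)); lra. }
  lra. Qed.
Lemma pr_INR n : pr INR n = INR (Factorial.fact n).
Proof. induction n; [simpl; reflexivity|]. change (pr INR (S n)) with (pr INR n * INR (S n)). rewrite IHn.
  change (Factorial.fact (S n)) with (S n * Factorial.fact n)%nat.
  rewrite mult_INR. ring. Qed.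

Lemma exp_INR n : exp (INR n) = exp 1 ^ n.
Proof. induction n; [simpl; apply exp_0|]. rewrite S_INR, exp_plus, IHn. simpl; ring. Qed.

Lemma fact_lb n : INR n ^ n <= exp 1 ^ n * pr INR n.
Proof. rewrite pr_INR. assert (H := exp_ge_taylor (INR n) n (pos_INR n)).
  assert (H2 := sum_f_ge_last (fun k => INR n ^ k / INR (Factorial.fact k)) n).
  assert (Hf := INR_fact_lt_0 n).
  assert (INR n ^ n / INR (Factorial.fact n) <= exp (INR n)).
  { eapply Rle_trans; [apply H2|exact H]. intros i.
    apply Rmult_le_pos. apply pow_le, pos_INR. left; apply Rinv_0_lt_compat, INR_fact_lt_0. }
  rewrite exp_INR in H0.
  apply (Rmult_le_compat_r (INR (Factorial.fact n))) in H0; [|lra].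
  unfold Rdiv in H0. rewrite Rmult_assoc, Rinv_l in H0 by lra. lra. Qed.

Lemma carl_pt c n : (forall i, 0 < c i) -> (1 <= n)%nat ->
  pr c n <= (exp 1 * sm (fun i => INR i * c i) n / (INR n)^2) ^ n.
Proof. intros Hc Hn.
  assert (HnR : 0 < INR n) by (apply lt_0_INR; lia).
  assert (Hy : forall i, 0 < (fun i => INR i * c i) (S i)).
  { intros i. apply Rmult_lt_0_compat; [apply lt_0_INR; lia| auto]. }
  set (A := sm (fun i => INR i * c i) n).
  assert (H1 : pr (fun i => INR i * c i) n <= (A / INR n) ^ n).
  { unfold A. rewrite (pr_ext _ (fun i => INR (S (pred i)) * c (S (pred i)))) by (intros i Hi; replace (S (pred i)) with i by lia; reflexivity).
    rewrite (sm_ext _ (fun i => INR (S (pred i)) * c (S (pred i)))) by (intros i Hi; replace (S (pred i)) with i by lia; reflexivity).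
    apply amgm; [intros i; apply (Hy (pred i)) | exact Hn]. }
  rewrite pr_mul in H1.
  assert (H2 := fact_lb n).
  set (P := pr INR n) in *. set (Q := pr c n).
  assert (HQ : 0 < Q) by (apply pr_pos; auto).
  assert (He : 0 < exp 1) by apply exp_pos.
  assert (Hnn : 0 < INR n ^ n) by (apply pow_lt; auto).
  replace (exp 1 * A / INR n ^ 2) with (exp 1 * (A / INR n) * / INR n) by (field; lra).
  rewrite !Rpow_mult_distr, pow_inv.
  apply (Rmult_le_reg_r (INR n ^ n)); auto.
  rewrite Rmult_assoc, Rinv_l by lra. rewrite Rmult_1_r.
  apply Rle_trans with (Q * (exp 1 ^ n * P)).
  { apply Rmult_le_compat_l; lra. }
  replace (Q * (exp 1 ^ n * P)) with (exp 1 ^ n * (P * Q)) by ring.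
  apply Rmult_le_compat_l; [apply pow_le; lra|]. exact H1. Qed.

Lemma carl_sum c N : (forall i, 0 <= c i) ->
  sm (fun m => sm (fun i => INR i * c i) m / (INR m)^2) N
  + sm (fun i => INR i * c i) N / INR N <= 2 * sm c N.
Proof. intros Hc. induction N.
  - simpl. unfold Rdiv; rewrite Rmult_0_l; lra.
  - cbn [sm]. set (A := sm (fun i => INR i * c i) N) in *.
    set (S0 := sm (fun m => sm (fun i => INR i * c i) m / INR m ^ 2) N) in *.
    assert (HA : 0 <= A). { apply sm_nonneg. intros; apply Rmult_le_pos; [apply pos_INR|auto]. }
    assert (Hc1 := Hc (S N)).
    assert (Hst : (A + INR (S N) * c (S N)) / INR (S N) ^ 2 + (A + INR (S N) * c (S N)) / INR (S N)
              <= A / INR N + 2 * c (S N)).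
    { destruct N.
      - unfold A; simpl. unfold Rdiv. rewrite Rinv_0. lra.
      - set (x := INR (S N)) in *. rewrite S_INR. fold x.
        assert (Hx : 1 <= x) by (unfold x; rewrite S_INR; assert (H0 := pos_INR N); lra).
        assert (E : (A + (x + 1) * c (S (S N))) / (x + 1) ^ 2 + (A + (x + 1) * c (S (S N))) / (x + 1)
                = A / x + 2 * c (S (S N)) - A / (x * (x+1)^2) - c (S (S N)) * (x / (x+1))) by (field; lra).
        rewrite E.
        assert (0 <= A / (x * (x+1)^2)) by (apply Rdiv_le_0_compat; [lra| apply Rmult_lt_0_compat; nra]).
        assert (0 <= c (S (S N)) * (x / (x+1))) by (apply Rmult_le_pos; [lra| apply Rdiv_le_0_compat; lra]).
        lra. }
    lra. Qed.

Lemma ws_pos mu : weight_seq mu -> forall k, 1 <= mu k.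
Proof. intros [H0 [H1 _]] k. induction k; [lra|]. specialize (H1 k); lra. Qed.

Lemma ws_mono mu : weight_seq mu -> forall a b, (a <= b)%nat -> mu a <= mu b.
Proof. intros [H0 [H1 _]] a b Hab. induction Hab; [lra|]. specialize (H1 m); lra. Qed.

Lemma Mseq_split mu j n : Mseq mu (j + n) = Mseq mu j * pr (fun i => mu (j + i)%nat) n.
Proof. unfold Mseq. induction n.
  - rewrite Nat.add_0_r; simpl; ring.
  - rewrite Nat.add_succ_r. change (prod_f_R0 mu (S (j + n))) with (prod_f_R0 mu (j + n) * mu (S (j+n))).
    rewrite IHn. cbn [pr]. rewrite Nat.add_succ_r. ring. Qed.

Lemma Mseq_pos mu : weight_seq mu -> forall k, 0 < Mseq mu k.
Proof. intros H k. unfold Mseq. induction k; simpl.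
  - assert (H1 := ws_pos mu H 0); lra.
  - assert (H1 := ws_pos mu H (S k)). apply Rmult_lt_0_compat; lra. Qed.

Lemma Mseq_0 mu : weight_seq mu -> Mseq mu 0 = 1.
Proof. intros [H _]. unfold Mseq; simpl; auto. Qed.

Lemma Mseq_S mu k : Mseq mu (S k) = Mseq mu k * mu (S k).
Proof. reflexivity. Qed.

Lemma partial_le_Series a N : (forall n, 0 <= a n) -> ex_series a -> sum_n a N <= Series a.
Proof. intros Ha He. apply Series_correct in He.
  assert (H := is_lim_seq_le_loc (fun _ => sum_n a N) (sum_n a) (sum_n a N) (Series a)).
  simpl in H. apply H; [| apply is_lim_seq_const| exact He].
  exists N. intros n Hn. induction Hn; [lra|]. rewrite sum_Sn. unfold plus; simpl.
  specialize (Ha (S m)); lra. Qed.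

Lemma Series_le_bound a B : ex_series a -> (forall N, sum_n a N <= B) -> Series a <= B.
Proof. intros He HB. apply Series_correct in He.
  assert (H := is_lim_seq_le (sum_n a) (fun _ => B) (Series a) B HB He (is_lim_seq_const B)).
  simpl in H. exact H. Qed.

Lemma tail_ex mu k : nonquasianalytic mu -> ex_series (fun l => / mu (k + l)%nat).
Proof. intros H. apply (ex_series_incr_n (fun l => / mu l) k). exact H. Qed.

Lemma tail_ge mu k : weight_seq mu -> nonquasianalytic mu -> / mu k <= tail mu k.
Proof. intros Hw Hq. unfold tail.
  assert (H := partial_le_Series (fun l => / mu (k + l)%nat) 0).
  rewrite sum_O in H. rewrite Nat.add_0_r in H. apply H; [|apply tail_ex; auto].
  intros n. left. apply Rinv_0_lt_compat. assert (H1 := ws_pos mu Hw (k+n)); lra. Qed.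

Lemma tail_pos mu k : weight_seq mu -> nonquasianalytic mu -> 0 < tail mu k.
Proof. intros Hw Hq. assert (H := tail_ge mu k Hw Hq).
  assert (0 < / mu k) by (apply Rinv_0_lt_compat; assert (H1 := ws_pos mu Hw k); lra). lra. Qed.

Lemma finmin_le f n i : (i <= n)%nat -> finmin f n <= f i.
Proof. induction n; intros Hi; simpl.
  - replace i with 0%nat by lia; lra.
  - destruct (Nat.eq_dec i (S n)) as [->|Hne]. apply Rmin_r.
    eapply Rle_trans; [apply Rmin_l| apply IHn; lia]. Qed.

Lemma finmin_ex f n : exists i, (i <= n)%nat /\ finmin f n = f i.
Proof. induction n; simpl. exists 0%nat; split; auto.
  destruct IHn as [i [Hi E]]. unfold Rmin. destruct (Rle_dec (finmin f n) (f (S n))).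
  exists i; split; auto. exists (S n); split; auto. Qed.

Lemma pow_le_inv x y n : 0 <= x -> 0 <= y -> (1 <= n)%nat -> x ^ n <= y ^ n -> x <= y.
Proof. intros Hx Hy Hn H. destruct (Rle_dec x y) as [|Hlt]; auto. exfalso.
  assert (y < x) by lra. destruct n; [lia|].
  assert (y ^ (S n) < x ^ (S n)).
  { clear Hn H. induction n. simpl; lra. 
    change (y * y ^ (S n) < x * x ^ (S n)).
    assert (0 <= y ^ S n) by (apply pow_le; auto).
    apply Rle_lt_trans with (y * x ^ S n). apply Rmult_le_compat_l; lra.
    apply Rmult_lt_compat_r; [apply pow_lt; lra| auto]. }
  lra. Qed.

Lemma Lseq_le mu n i : (i <= n)%nat ->
  Lseq mu (S n) <= (INR (S n) / tail mu (S n)) ^ (S n - i) * Mseq mu i.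
Proof. intros Hi. unfold Lseq. apply (finmin_le (fun j => _) n i Hi). Qed.

Lemma Lseq_ex mu n : exists i, (i <= n)%nat /\
  Lseq mu (S n) = (INR (S n) / tail mu (S n)) ^ (S n - i) * Mseq mu i.
Proof. unfold Lseq. apply (finmin_ex (fun j => _) n). Qed.

Lemma Lseq_pos mu k : weight_seq mu -> nonquasianalytic mu -> 0 < Lseq mu k.
Proof. intros Hw Hq. destruct k. simpl; lra.
  destruct (Lseq_ex mu k) as [i [Hi ->]]. apply Rmult_lt_0_compat; [|apply Mseq_pos; auto].
  apply pow_lt. apply Rdiv_lt_0_compat. apply lt_0_INR; lia. apply tail_pos; auto. Qed.

Lemma sum_shift_le F r P : (forall m, 0 <= F m) -> (1 <= r)%nat ->
  sum_n (fun q => F (r + q)%nat) P <= sm F (r + P).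
Proof. intros HF Hr. induction P.
  - rewrite sum_O, Nat.add_0_r. destruct r; [lia|]. cbn [sm].
    assert (0 <= sm F r) by (apply sm_nonneg; auto). lra.
  - rewrite sum_Sn. unfold plus; simpl. rewrite Nat.add_succ_r. cbn [sm]. lra. Qed.

Lemma rho_bound mu nu C j r Phi g :
  weight_seq mu -> weight_seq nu -> nonquasianalytic mu -> nonquasianalytic nu ->
  1 <= C -> (forall l, Mseq mu l <= C ^ l * Mseq nu l) -> (1 <= r)%nat ->
  1 <= Phi -> Phi ^ r = C ^ j * (Mseq nu j / Mseq mu j) ->
  0 < g -> g ^ r = Mseq mu j / Mseq mu (j + r) ->
  tail nu (j + r) <= 2 * exp 1 * C * Phi * (INR r * g + tail mu (j + r)).
Proof.
  intros Hwm Hwn Hqm Hqn HC HMN Hr HPhi EPhi Hg Eg.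
  set (k := (j + r)%nat) in *.
  set (c := fun i => / mu (j + i)%nat).
  set (c' := fun i => if Nat.leb i r then g else c i).
  assert (Hmu : forall i, 0 < mu i) by (intros i; assert (H := ws_pos mu Hwm i); lra).
  assert (Hnu : forall i, 0 < nu i) by (intros i; assert (H := ws_pos nu Hwn i); lra).
  assert (Hc : forall i, 0 < c i) by (intros i; apply Rinv_0_lt_compat; auto).
  assert (Hc' : forall i, 0 < c' i) by (intros i; unfold c'; destruct (Nat.leb i r); auto).
  set (A := fun n => sm (fun i => INR i * c' i) n).
  assert (He : 0 < exp 1) by apply exp_pos.
  assert (HMj := Mseq_pos mu Hwm j). assert (HNj := Mseq_pos nu Hwn j).
  assert (Hpc : forall q, pr c' (r + q) = pr c (r + q)).
  { induction q.
    - rewrite Nat.add_0_r. rewrite (pr_ext c' (fun _ => g)).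
      2:{ intros i Hi. unfold c'. replace (Nat.leb i r) with true by (symmetry; apply Nat.leb_le; lia). reflexivity. }
      rewrite pr_const, Eg. unfold c. rewrite pr_inv by auto. fold k.
      unfold k. rewrite Mseq_split. field. split. apply Rgt_not_eq, pr_pos. intros; auto. lra.
    - rewrite Nat.add_succ_r. cbn [pr]. rewrite IHq. unfold c' at 1.
      replace (Nat.leb (S (r + q)) r) with false by (symmetry; apply Nat.leb_gt; lia). reflexivity. }
  assert (Hpt : forall q, / nu (k + q)%nat <= C * Phi * exp 1 * A (r + q)%nat / (INR (r + q))^2).
  { intros q. set (n := (r + q)%nat).
    assert (Hn : (1 <= n)%nat) by (unfold n; lia).
    assert (Ekl : (k + q = j + n)%nat) by (unfold k, n; lia). rewrite Ekl.
    assert (HnR : 0 < INR n) by (apply lt_0_INR; lia).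
    assert (HA : 0 < A n) by (apply sm_pos; [intros i; apply Rmult_lt_0_compat; [apply lt_0_INR; lia|auto]| auto]).
    apply (pow_le_inv _ _ n); auto.
    { left; apply Rinv_0_lt_compat; auto. }
    { apply Rmult_le_pos; [|left; apply Rinv_0_lt_compat; apply pow_lt; auto].
      assert (0 <= C * Phi) by nra. apply Rmult_le_pos; [apply Rmult_le_pos|]; lra. }
    set (x := / nu (j + n)%nat).
    assert (S1 : x ^ n <= Mseq nu j / Mseq nu (j + n)).
    { unfold x. rewrite pow_inv. rewrite Mseq_split.
      assert (Hp : pr (fun i => nu (j + i)%nat) n <= nu (j + n)%nat ^ n).
      { apply pr_le_pow. intros i Hi. split. left; auto. apply ws_mono; auto; lia. }
      assert (0 < pr (fun i => nu (j + i)%nat) n) by (apply pr_pos; auto).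
      assert (0 < nu (j+n)%nat ^ n) by (apply pow_lt; auto).
      replace (Mseq nu j / (Mseq nu j * pr (fun i : nat => nu (j + i)%nat) n))
        with (/ pr (fun i : nat => nu (j + i)%nat) n) by (field; lra).
      apply Rinv_le_contravar; auto. }
    assert (S2 : Mseq nu j / Mseq nu (j + n) <= C ^ (j + n) * (Mseq nu j / Mseq mu j) * pr c n).
    { unfold c. rewrite pr_inv by auto.
      assert (H1 := HMN (j + n)%nat).
      assert (Em := Mseq_split mu j n).
      set (p := pr (fun i : nat => mu (j + i)%nat) n) in *.
      assert (0 < p) by (apply pr_pos; auto).
      assert (HNl := Mseq_pos nu Hwn (j + n)). assert (HMl := Mseq_pos mu Hwm (j + n)).
      assert (HCl : 0 < C ^ (j + n)) by (apply pow_lt; lra).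
      replace (C ^ (j + n) * (Mseq nu j / Mseq mu j) * / p) with (Mseq nu j * (C ^ (j + n) / Mseq mu (j + n))) by (rewrite Em; field; lra).
      unfold Rdiv. apply Rmult_le_compat_l; [lra|].
      replace (/ Mseq nu (j + n)) with ((/ Mseq nu (j + n) * / Mseq mu (j + n)) * Mseq mu (j + n)) by (field; lra).
      replace (C ^ (j + n) * / Mseq mu (j + n)) with ((/ Mseq nu (j + n) * / Mseq mu (j + n)) * (C ^ (j + n) * Mseq nu (j + n))) by (field; lra).
      apply Rmult_le_compat_l; [|exact H1].
      left; apply Rmult_lt_0_compat; apply Rinv_0_lt_compat; auto. }
    assert (S3 : pr c n = pr c' n) by (unfold n; symmetry; apply Hpc).
    assert (S4 := carl_pt c' n Hc' Hn). fold (A n) in S4.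
    assert (Hf : 0 <= Mseq nu j / Mseq mu j) by (left; apply Rdiv_lt_0_compat; auto).
    assert (S5 : C ^ (j + n) * (Mseq nu j / Mseq mu j) <= C ^ n * Phi ^ n).
    { rewrite pow_add. replace (C ^ j * C ^ n * (Mseq nu j / Mseq mu j)) with (C ^ n * (C ^ j * (Mseq nu j / Mseq mu j))) by ring.
      rewrite <- EPhi. apply Rmult_le_compat_l. apply pow_le; lra.
      apply Rle_pow; auto. unfold n; lia. }
    replace (C * Phi * exp 1 * A n / INR n ^ 2) with ((C * Phi) * (exp 1 * A n / INR n ^ 2)) by (field; lra).
    rewrite !Rpow_mult_distr.
    assert (Hpr : 0 < pr c' n) by (apply pr_pos; auto).
    eapply Rle_trans; [exact S1|]. eapply Rle_trans; [exact S2|]. rewrite S3.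
    apply Rmult_le_compat; auto. apply Rmult_le_pos; [apply pow_le; lra| auto]. lra. }
  assert (HAn : forall m, 0 <= A m / INR m ^ 2).
  { intros m. apply Rmult_le_pos. apply sm_nonneg. intros i; apply Rmult_le_pos; [apply pos_INR| left; auto].
    destruct m. simpl. rewrite Rmult_0_l, Rinv_0; lra. left; apply Rinv_0_lt_compat, pow_lt, lt_0_INR; lia. }
  assert (Hsc : forall P, sm c' (r + P) <= INR r * g + sum_n (fun q => / mu (k + q)%nat) P).
  { induction P.
    - rewrite Nat.add_0_r, sum_O, (sm_ext c' (fun _ => g)).
      2:{ intros i Hi. unfold c'. replace (Nat.leb i r) with true by (symmetry; apply Nat.leb_le; lia). reflexivity. }
      assert (Hsg : sm (fun _ => g) r = INR r * g). { clear. induction r. simpl; ring. cbn [sm]. rewrite IHr, S_INR. ring. }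
      rewrite Hsg. assert (0 < / mu (k + 0)%nat) by (apply Rinv_0_lt_compat; auto). lra.
    - rewrite Nat.add_succ_r, sum_Sn. cbn [sm]. unfold plus; simpl.
      assert (E1 : c' (S (r + P)) = / mu (k + S P)%nat).
      { unfold c'. replace (Nat.leb (S (r + P)) r) with false by (symmetry; apply Nat.leb_gt; lia).
        unfold c. f_equal. f_equal. unfold k; lia. }
      rewrite E1. lra. }
  apply Series_le_bound. apply tail_ex; auto.
  intros P.
  apply Rle_trans with (C * Phi * exp 1 * sum_n (fun q => A (r + q)%nat / INR (r + q) ^ 2) P).
  { clear Hsc. induction P.
    - rewrite !sum_O. specialize (Hpt 0%nat). unfold Rdiv in *. rewrite !Rmult_assoc in *. exact Hpt.
    - rewrite !sum_Sn. change (plus ?a ?b) with (a + b). specialize (Hpt (S P)). unfold Rdiv in *. rewrite Rmult_plus_distr_l.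
      rewrite !Rmult_assoc in *. lra. }
  assert (HCP : 0 <= C * Phi * exp 1) by (assert (0 <= C * Phi) by nra; apply Rmult_le_pos; lra).
  assert (T1 := sum_shift_le (fun m => A m / INR m ^ 2) r P HAn Hr).
  assert (T2 := carl_sum c' (r + P) (fun i => Rlt_le _ _ (Hc' i))). 
  assert (T2' : sm (fun m => A m / INR m ^ 2) (r + P) <= 2 * sm c' (r + P)).
  { assert (0 <= A (r + P)%nat / INR (r + P)).
    { apply Rmult_le_pos. apply sm_nonneg. intros i; apply Rmult_le_pos; [apply pos_INR| left; auto].
      left; apply Rinv_0_lt_compat, lt_0_INR; lia. }
    unfold A in *. lra. }
  assert (T3 := Hsc P).
  assert (T4 := partial_le_Series (fun q => / mu (k + q)%nat) P (fun q => Rlt_le _ _ (Rinv_0_lt_compat _ (Hmu _))) (tail_ex mu k Hqm)).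
  fold (tail mu k) in T4.
  apply Rle_trans with (C * Phi * exp 1 * (2 * (INR r * g + tail mu k))).
  { apply Rmult_le_compat_l; auto. lra. }
  right; ring.
Qed.

Lemma INR_le_2pow k : INR k <= 2 ^ k.
Proof. induction k. simpl; lra. rewrite S_INR. simpl.
  assert (1 <= 2 ^ k) by (apply pow_R1_Rle; lra). lra. Qed.

Lemma final_alg (L rho sigma g Phi C f Mj Mk : R) (j r : nat) :
  0 < L -> 0 < rho -> 0 < sigma -> 0 < g -> 0 < Phi -> 1 <= C -> 0 < f -> 0 < Mj -> 0 < Mk ->
  (1 <= r)%nat ->
  L <= (INR (j + r) / sigma) ^ r * Mj ->
  L <= INR (j + r) * Mk ->
  g ^ r = Mj / Mk ->
  Phi ^ r = C ^ j * f ->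
  rho <= 2 * exp 1 * C * Phi * (INR r * g + sigma) ->
  L <= (24 * C) ^ (j + r) * ((INR (j + r) / rho) ^ r * (f * Mj)).
Proof.
  intros HL Hrho Hs Hg HPhi HC Hf HMj HMk Hr H1 H2 H3 H4 H5.
  set (kR := INR (j + r)) in *.
  assert (HkR : 1 <= kR) by (unfold kR; apply (le_INR 1); lia).
  assert (HrR : 1 <= INR r) by (apply (le_INR 1); lia).
  assert (Hrk : INR r <= kR) by (unfold kR; apply le_INR; lia).
  assert (He : 0 < exp 1) by apply exp_pos. assert (He3 := exp_le_3).
  assert (Hrg : 0 < INR r * g) by nra.
  set (W := INR r * g + sigma).
  assert (HW : 0 < W) by (unfold W; nra).
  assert (Hrho_r : rho ^ r <= (2 * exp 1 * C) ^ r * (C ^ j * f) * W ^ r).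
  { rewrite <- H4, <- !Rpow_mult_distr. apply pow_incr. split; [lra|]. unfold W in *. lra. }
  assert (LW : L * W ^ r <= 2 ^ r * kR ^ r * kR * Mj).
  { destruct (Rle_dec (INR r * g) sigma) as [Hc|Hc].
    - assert (W ^ r <= (2 * sigma) ^ r) by (apply pow_incr; unfold W; lra).
      rewrite Rpow_mult_distr in H.
      apply Rle_trans with (((kR / sigma) ^ r * Mj) * (2 ^ r * sigma ^ r)).
      { apply Rmult_le_compat; auto; try lra. apply pow_le; lra. }
      replace ((kR / sigma) ^ r * Mj * (2 ^ r * sigma ^ r)) with (2 ^ r * kR ^ r * Mj * ((/ sigma) ^ r * sigma ^ r))
        by (unfold Rdiv; rewrite Rpow_mult_distr; ring).
      rewrite <- (Rpow_mult_distr (/ sigma) sigma), Rinv_l, pow1 by lra.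
      assert (0 < 2 ^ r * kR ^ r) by (apply Rmult_lt_0_compat; apply pow_lt; lra).
      assert (0 < 2 ^ r * kR ^ r * Mj) by (apply Rmult_lt_0_compat; lra). nra.
    - assert (W ^ r <= (2 * (INR r * g)) ^ r) by (apply pow_incr; unfold W; lra).
      rewrite !Rpow_mult_distr, H3 in H.
      apply Rle_trans with ((kR * Mk) * (2 ^ r * (INR r ^ r * (Mj / Mk)))).
      { apply Rmult_le_compat; auto; try lra. apply pow_le; lra. }
      replace (kR * Mk * (2 ^ r * (INR r ^ r * (Mj / Mk)))) with (2 ^ r * INR r ^ r * kR * Mj) by (field; lra).
      assert (INR r ^ r <= kR ^ r) by (apply pow_incr; lra).
      assert (0 < 2 ^ r) by (apply pow_lt; lra).
      apply Rmult_le_compat_r; [lra|]. apply Rmult_le_compat_r; [lra|]. apply Rmult_le_compat_l; lra. }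
  assert (Hkey : L * rho ^ r <= (24 * C) ^ (j + r) * kR ^ r * f * Mj).
  { apply Rle_trans with (L * ((2 * exp 1 * C) ^ r * (C ^ j * f) * W ^ r)).
    { apply Rmult_le_compat_l; lra. }
    replace (L * ((2 * exp 1 * C) ^ r * (C ^ j * f) * W ^ r)) with (((2 * exp 1 * C) ^ r * C ^ j * f) * (L * W ^ r)) by ring.
    assert (0 < (2 * exp 1 * C) ^ r * C ^ j * f) by (apply Rmult_lt_0_compat; [apply Rmult_lt_0_compat; apply pow_lt|]; nra).
    apply Rle_trans with (((2 * exp 1 * C) ^ r * C ^ j * f) * (2 ^ r * kR ^ r * kR * Mj)).
    { apply Rmult_le_compat_l; lra. }
    assert (Hb : (2 * exp 1 * C) ^ r * C ^ j * 2 ^ r * kR <= (24 * C) ^ (j + r)).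
    { replace ((2 * exp 1 * C) ^ r * C ^ j * 2 ^ r * kR) with (((2 * (2 * exp 1 * C)) ^ r * C ^ j) * kR)
        by (rewrite Rpow_mult_distr; ring).
      replace (24 * C) with (2 * (12 * C)) by ring. rewrite (Rpow_mult_distr 2 (12 * C)).
      rewrite (Rmult_comm (2 ^ (j + r))). apply Rmult_le_compat.
      - apply Rmult_le_pos; apply pow_le; nra.
      - lra.
      - rewrite pow_add, Rmult_comm. apply Rmult_le_compat; try (apply pow_le; nra).
        apply pow_incr; nra. apply pow_incr; nra.
      - apply INR_le_2pow. }
    assert (0 < kR ^ r * f * Mj) by (apply Rmult_lt_0_compat; [apply Rmult_lt_0_compat; [apply pow_lt|]|]; lra).
    replace ((2 * exp 1 * C) ^ r * C ^ j * f * (2 ^ r * kR ^ r * kR * Mj)) with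
      (((2 * exp 1 * C) ^ r * C ^ j * 2 ^ r * kR) * (kR ^ r * f * Mj)) by ring.
    replace ((24 * C) ^ (j + r) * kR ^ r * f * Mj) with ((24 * C) ^ (j + r) * (kR ^ r * f * Mj)) by ring.
    apply Rmult_le_compat_r; lra. }
  assert (Hrr : 0 < rho ^ r) by (apply pow_lt; lra).
  unfold Rdiv. rewrite (Rpow_mult_distr kR (/ rho)), pow_inv.
  apply (Rmult_le_reg_r (rho ^ r)); auto.
  replace ((24 * C) ^ (j + r) * (kR ^ r * / rho ^ r * (f * Mj)) * rho ^ r) with
    ((24 * C) ^ (j + r) * kR ^ r * f * Mj) by (field; lra).
  exact Hkey. Qed.

Lemma root_pow X r : 0 < X -> (1 <= r)%nat -> Rpower X (/ INR r) ^ r = X.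
Proof. intros HX Hr. assert (HrR : 0 < INR r) by (apply lt_0_INR; lia).
  rewrite <- Rpower_pow by (unfold Rpower; apply exp_pos).
  rewrite Rpower_mult, Rinv_l by lra. apply Rpower_1; auto. Qed.

Lemma Rpower_pos X y : 0 < Rpower X y.
Proof. unfold Rpower; apply exp_pos. Qed.

Lemma part1 mu nu C :
  weight_seq mu -> weight_seq nu -> nonquasianalytic mu -> nonquasianalytic nu ->
  1 <= C -> (forall l, Mseq mu l <= C ^ l * Mseq nu l) ->
  forall n, Lseq mu (S n) <= (24 * C) ^ (S n) * Lseq nu (S n).
Proof.
  intros Hwm Hwn Hqm Hqn HC HMN n.
  destruct (Lseq_ex nu n) as [j [Hj EL]].
  assert (H1 := Lseq_le mu n j Hj).
  assert (H2 : Lseq mu (S n) <= INR (S n) * Mseq mu (S n)).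
  { eapply Rle_trans. apply (Lseq_le mu n n); lia.
    replace (S n - n)%nat with 1%nat by lia. rewrite pow_1, Mseq_S.
    assert (Hs := tail_ge mu (S n) Hwm Hqm). assert (Hm := ws_pos mu Hwm (S n)).
    assert (Hsp := tail_pos mu (S n) Hwm Hqm). assert (HM := Mseq_pos mu Hwm n).
    assert (INR (S n) / tail mu (S n) <= INR (S n) * mu (S n)).
    { unfold Rdiv. apply Rmult_le_compat_l. apply pos_INR.
      rewrite <- (Rinv_inv (mu (S n))). apply Rinv_le_contravar; auto. apply Rinv_0_lt_compat; lra. }
    replace (INR (S n) * (Mseq mu n * mu (S n))) with ((INR (S n) * mu (S n)) * Mseq mu n) by ring.
    apply Rmult_le_compat_r; lra. }
  set (r := (S n - j)%nat) in *.
  assert (Ek : S n = (j + r)%nat) by (unfold r; lia).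
  assert (Hr : (1 <= r)%nat) by (unfold r; lia).
  rewrite Ek in H1, H2, EL |- *.
  set (k := (j + r)%nat) in *.
  assert (HMj := Mseq_pos mu Hwm j). assert (HNj := Mseq_pos nu Hwn j).
  assert (HMk := Mseq_pos mu Hwm k).
  set (f := Mseq nu j / Mseq mu j).
  assert (Hf : 0 < f) by (apply Rdiv_lt_0_compat; auto).
  assert (HCj : 1 <= C ^ j * f).
  { unfold f. assert (H := HMN j). assert (0 < C ^ j) by (apply pow_lt; lra).
    replace (C ^ j * (Mseq nu j / Mseq mu j)) with ((C ^ j * Mseq nu j) / Mseq mu j) by (field; lra).
    apply (Rmult_le_reg_r (Mseq mu j)); auto. unfold Rdiv. rewrite Rmult_assoc, Rinv_l; lra. }
  set (Phi := Rpower (C ^ j * f) (/ INR r)).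
  set (g := Rpower (Mseq mu j / Mseq mu k) (/ INR r)).
  assert (EPhi : Phi ^ r = C ^ j * f) by (apply root_pow; auto; lra).
  assert (Eg : g ^ r = Mseq mu j / Mseq mu k) by (apply root_pow; auto; apply Rdiv_lt_0_compat; auto).
  assert (HPhi : 1 <= Phi).
  { unfold Phi. rewrite <- (Rpower_O (C ^ j * f)) by lra. apply Rle_Rpower; auto.
    left; apply Rinv_0_lt_compat, lt_0_INR; lia. }
  assert (HB := rho_bound mu nu C j r Phi g Hwm Hwn Hqm Hqn HC HMN Hr HPhi EPhi (Rpower_pos _ _) Eg).
  fold k in HB.
  rewrite EL. replace (Mseq nu j) with (f * Mseq mu j) by (unfold f; field; lra).
  apply final_alg with (sigma := tail mu k) (g := g) (Phi := Phi) (Mk := Mseq mu k); auto.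
  apply Lseq_pos; auto. apply tail_pos; auto. apply tail_pos; auto. apply Rpower_pos. lra.
Qed.

Lemma omega_ge0 P t : P 0%nat = 1 -> Rbar_le (Finite 0) (omega P t).
Proof. intros H0. unfold omega. apply (Sup_seq_minor_le _ 0 0). cbv zeta.
  rewrite H0. replace (t ^ 0 * 1 / 1) with 1 by (simpl; field).
  destruct (Rlt_dec 0 1); [|lra]. simpl. rewrite ln_1. lra. Qed.

Lemma omega_term P t k : P 0%nat = 1 -> 0 < t -> 0 < P k ->
  Rbar_le (Finite (ln (t ^ k / P k))) (omega P t).
Proof. intros H0 Ht HP. unfold omega. apply (Sup_seq_minor_le _ _ k). cbv zeta.
  rewrite H0. rewrite Rmult_1_r. destruct (Rlt_dec 0 (t ^ k / P k)) as [|n].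
  simpl; lra. exfalso; apply n. apply Rdiv_lt_0_compat; auto. apply pow_lt; auto. Qed.

Lemma omega_mono P Q A t : P 0%nat = 1 -> Q 0%nat = 1 -> (forall k, 0 < P k) -> (forall k, 0 < Q k) ->
  1 <= A -> 0 <= t -> (forall k, P k <= A ^ k * Q k) ->
  Rbar_le (omega Q t) (omega P (A * t)).
Proof. intros HP0 HQ0 HP HQ HA Ht HPQ. unfold omega. apply Sup_seq_le. intros k. cbv zeta.
  rewrite HP0, HQ0, !Rmult_1_r.
  assert (Hle : t ^ k / Q k <= (A * t) ^ k / P k).
  { rewrite Rpow_mult_distr. specialize (HP k); specialize (HQ k); specialize (HPQ k).
    assert (0 <= t ^ k) by (apply pow_le; auto). assert (0 < A ^ k) by (apply pow_lt; lra).
    unfold Rdiv. apply (Rmult_le_reg_r (P k * Q k)). nra.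
    replace (t ^ k * / Q k * (P k * Q k)) with (t ^ k * P k) by (field; lra).
    replace (A ^ k * t ^ k * / P k * (P k * Q k)) with (t ^ k * (A ^ k * Q k)) by (field; lra).
    apply Rmult_le_compat_l; auto. }
  destruct (Rlt_dec 0 (t ^ k / Q k)) as [h1|h1]; [|simpl; auto].
  destruct (Rlt_dec 0 ((A * t) ^ k / P k)) as [h2|h2]; [|lra].
  simpl. apply ln_le; auto. Qed.

Lemma expneg_anti w1 w2 : Rbar_le (Finite 0) w1 -> Rbar_le w1 w2 -> expneg w2 <= expneg w1.
Proof. intros H1 H2. destruct w1 as [a| |], w2 as [b| |]; simpl in *; try tauto; try lra.
  - destruct (Rle_lt_or_eq_dec _ _ H2). left; apply exp_increasing; lra. subst; lra.
  - left; apply exp_pos.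
Qed.

Lemma expneg_nonneg w : 0 <= expneg w.
Proof. destruct w; simpl; try lra. left; apply exp_pos. Qed.

Lemma elem_bound Q k t : Q 0%nat = 1 -> (forall k, 0 < Q k) -> (1 <= k)%nat -> 0 <= t ->
  t ^ k * expneg (omega Q t) <= Q k.
Proof. intros HQ0 HQ Hk Ht. destruct (Req_dec t 0) as [->|Ht0].
  - rewrite pow_i by lia. rewrite Rmult_0_l. left; auto.
  - assert (Htp : 0 < t) by lra. assert (Htk : 0 < t ^ k) by (apply pow_lt; auto).
    assert (Ho := omega_term Q t k HQ0 Htp (HQ k)).
    destruct (omega Q t) as [w| |]; simpl in *.
    + assert (exp (- w) <= exp (- ln (t ^ k / Q k))).
      { destruct (Rle_lt_or_eq_dec _ _ Ho). left; apply exp_increasing; lra. subst; lra. }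
      rewrite (exp_Ropp (ln _)), exp_ln in H by (apply Rdiv_lt_0_compat; auto).
      rewrite Rinv_div in H. 
      apply Rle_trans with (t ^ k * (Q k / t ^ k)). apply Rmult_le_compat_l; lra.
      right; field; lra.
    + rewrite Rmult_0_r; left; auto.
    + rewrite Rmult_0_r; left; auto. Qed.

Definition Eset (P : nat -> R) k := fun x => exists t, 0 <= t /\ x = t ^ k * expneg (omega P t).

Lemma lub_fin Q k : Q 0%nat = 1 -> (forall k, 0 < Q k) -> (1 <= k)%nat ->
  exists l, Lub_Rbar (Eset Q k) = Finite l /\ 0 <= l /\ (forall x, Eset Q k x -> x <= l).
Proof. intros HQ0 HQ Hk. destruct (Lub_Rbar_correct (Eset Q k)) as [Hub Hleast].
  assert (H0 : Eset Q k 0). { exists 0; split; [lra|]. rewrite pow_i by lia. ring. }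
  assert (HB : is_ub_Rbar (Eset Q k) (Q k)).
  { intros x [t [Ht ->]]. simpl. apply elem_bound; auto. }
  assert (H1 := Hub 0 H0). assert (H2 := Hleast _ HB).
  destruct (Lub_Rbar (Eset Q k)) as [l| |]; simpl in *; try tauto.
  exists l; split; [reflexivity|split; [exact H1|]]. intros x Hx. apply (Hub x Hx). Qed.

Lemma part2 P Q A k : P 0%nat = 1 -> Q 0%nat = 1 -> (forall k, 0 < P k) -> (forall k, 0 < Q k) ->
  1 <= A -> (forall k, P k <= A ^ k * Q k) -> (1 <= k)%nat ->
  lc_minorant P k / lc_minorant Q k <= A ^ k.
Proof. intros HP0 HQ0 HP HQ HA HPQ Hk. unfold lc_minorant. rewrite HP0, HQ0, !Rmult_1_l.
  fold (Eset P k). fold (Eset Q k).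
  destruct (lub_fin P k HP0 HP Hk) as [lP [EP [HlP _]]].
  destruct (lub_fin Q k HQ0 HQ Hk) as [lQ [EQ [HlQ HubQ]]].
  rewrite EP, EQ. simpl.
  assert (HAk : 0 < A ^ k) by (apply pow_lt; lra).
  assert (Hmain : lP <= A ^ k * lQ).
  { destruct (Lub_Rbar_correct (Eset P k)) as [_ Hleast]. rewrite EP in Hleast.
    apply (Hleast (Finite (A ^ k * lQ))). intros x [s [Hs ->]]. simpl.
    set (t := s / A). assert (Ht : 0 <= t) by (unfold t; apply Rdiv_le_0_compat; lra).
    assert (Es : s = A * t) by (unfold t; field; lra). rewrite Es.
    assert (Hom := omega_mono P Q A t HP0 HQ0 HP HQ HA Ht HPQ).
    assert (H0 := omega_ge0 Q t HQ0).
    assert (Hexp := expneg_anti _ _ H0 Hom).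
    assert (HE : Eset Q k (t ^ k * expneg (omega Q t))) by (exists t; split; auto).
    assert (HX := HubQ _ HE).
    rewrite Rpow_mult_distr, Rmult_assoc. apply Rmult_le_compat_l; [lra|].
    eapply Rle_trans; [|exact HX]. apply Rmult_le_compat_l; [apply pow_le; auto| exact Hexp]. }
  destruct (Req_dec lQ 0) as [->|HQn].
  - unfold Rdiv. rewrite Rinv_0, Rmult_0_r. lra.
  - apply (Rmult_le_reg_r lQ). lra. unfold Rdiv. rewrite Rmult_assoc, Rinv_l by lra. lra. Qed.

Lemma preceq_from P Q D : 1 <= D -> (forall k, (1 <= k)%nat -> P k / Q k <= D ^ k) -> preceq P Q.
Proof. intros HD H. exists D. intros k Hk. specialize (H k Hk).
  assert (HkR : 0 < INR k) by (apply lt_0_INR; lia).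
  destruct (Rlt_dec 0 (P k / Q k)) as [Hp|Hn].
  - eapply Rle_trans. apply Rle_Rpower_l; [left; apply Rinv_0_lt_compat; auto| split; [exact Hp| exact H]].
    rewrite <- Rpower_pow by lra. rewrite Rpower_mult, Rinv_r by lra. rewrite Rpower_1 by lra. lra.
  - unfold Rpower, ln. destruct (Rlt_dec 0 (P k / Q k)); [tauto|]. rewrite Rmult_0_r, exp_0. lra. Qed.

Lemma preceq_to mu nu : weight_seq mu -> weight_seq nu -> preceq (Mseq mu) (Mseq nu) ->
  exists C, 1 <= C /\ forall l, Mseq mu l <= C ^ l * Mseq nu l.
Proof. intros Hwm Hwn [C0 HC0]. exists (Rmax C0 1). split; [apply Rmax_r|].
  intros l. destruct l.
  - rewrite !Mseq_0 by auto. simpl; lra.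
  - specialize (HC0 (S l) ltac:(lia)).
    assert (HM := Mseq_pos mu Hwm (S l)). assert (HN := Mseq_pos nu Hwn (S l)).
    assert (Hx : 0 < Mseq mu (S l) / Mseq nu (S l)) by (apply Rdiv_lt_0_compat; auto).
    assert (E := root_pow _ (S l) Hx ltac:(lia)).
    assert (Mseq mu (S l) / Mseq nu (S l) <= Rmax C0 1 ^ S l).
    { rewrite <- E. apply pow_incr. split. left; apply Rpower_pos. eapply Rle_trans; [exact HC0| apply Rmax_l]. }
    apply (Rmult_le_reg_r (/ Mseq nu (S l))). apply Rinv_0_lt_compat; auto.
    rewrite Rmult_assoc, Rinv_r by lra. rewrite Rmult_1_r. exact H. Qed.

Theorem lemma4p4 (mu nu : nat -> R) :
  weight_seq mu -> weight_seq nu ->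
  nonquasianalytic mu -> nonquasianalytic nu ->
  preceq (Mseq mu) (Mseq nu) ->
  preceq (Lseq mu) (Lseq nu) /\
  preceq (lc_minorant (Lseq mu)) (lc_minorant (Lseq nu)).
Proof.
  intros Hwm Hwn Hqm Hqn Hp.
  destruct (preceq_to mu nu Hwm Hwn Hp) as [C [HC HMN]].
  assert (H1 := part1 mu nu C Hwm Hwn Hqm Hqn HC HMN).
  assert (HD : 1 <= 24 * C) by lra.
  assert (Hall : forall k, Lseq mu k <= (24 * C) ^ k * Lseq nu k).
  { intros [|n]. simpl; lra. apply H1. }
  assert (HPm := Lseq_pos mu). assert (HPn := Lseq_pos nu).
  split.
  - apply (preceq_from _ _ (24 * C) HD). intros k Hk.
    assert (HL := Lseq_pos nu k Hwn Hqn).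
    apply (Rmult_le_reg_r (Lseq nu k)); auto. unfold Rdiv. rewrite Rmult_assoc, Rinv_l by lra.
    rewrite Rmult_1_r. apply Hall.
  - apply (preceq_from _ _ (24 * C) HD). intros k Hk.
    apply part2; auto; intros; apply Lseq_pos; auto.
Qed.
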